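(* Let $n\ge 2$ and let $S_1$ and $S_2$ be two disjoint sets of cells of an $n\times n$ array, each of which forms a Hamilton cycle. Then the cells of $S_1\cup S_2$ can be filled with the integers $1,2,\dots,4n$, each used exactly once, so that in every row and every column the sum of the filled entries equals $8n+2$.
   Context: Rows and columns of an $n\times n$ array are indexed by $\{1,\dots,n\}$. Cells are identified with edges of the complete bipartite graph $K_{n,n}$ with parts $\{a_1,\dots,a_n\}$ and $\{b_1,\dots,b_n\}$, cell $(i,j)$ corresponding to edge $\{a_i,b_j\}$. A set of cells forms a Hamilton cycle if the corresponding edge set is a single cycle of length $2n$ in $K_{n,n}$. (Thus each such set has exactly two cells in each row and in each column.) *)

(* Defs.v *)
From mathcomp Require Import all_boot.
Set Implicit Arguments. Unset Strict Implicit. Unset Printing Implicit Defensive.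

(* Vertices of K_{n,n}: inl i = a_i (row i), inr j = b_j (column j). *)
Definition vertex (n : nat) : finType := ('I_n + 'I_n)%type.

Definition is_row_vertex (n : nat) (v : vertex n) : bool :=
  if v is inl _ then true else false.

(* A cell (i,j) is the edge {a_i, b_j}. *)
Definition hamilton_cycle (n : nat) (S : {set 'I_n * 'I_n}) : Prop :=
  exists c : seq (vertex n),
    [/\ uniq c, size c = 2 * n,
        cycle (fun u v : vertex n => is_row_vertex u != is_row_vertex v) c &
        forall (i j : 'I_n),
          ((i, j) \in S) =
          ((next c (inl i) == inr j) || (next c (inr j) == inl i))].

(* Main.v *)
Require Import Defs.
From mathcomp Require Import all_boot.
From mathcomp Require Import zify.
Set Implicit Arguments. Unset Strict Implicit.

Definition prevo (n a : nat) := if a == 0 then (2 * n).-1 else a.-1.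
Definition nexte (n b : nat) := if b == (2 * n).-1 then 0 else b.+1.
Definition g1 (n a b : nat) := if b == a.+1 then 1 + a %/ 2 else 4 * n - b %/ 2.
Definition g2 (n a b : nat) := if b == a.+1 then 2 * n - a %/ 2 else 2 * n + 1 + b %/ 2.

Ltac crunch := rewrite /prevo /nexte; repeat (case: ifP => ?); rewrite /g1 /g2; repeat (case: ifP => ?); lia.
Ltac crunch2 := rewrite /prevo /nexte; repeat (rewrite /=; case: ifP => ?); rewrite /g1 /g2; repeat (case: ifP => ?); lia.

Definition cellp n a b :=
  [/\ odd a = false, a < 2 * n, odd b, b < 2 * n & (b == a.+1) || (b == prevo n a)].

Lemma g1_inj n a b a' b' : 2 <= n -> cellp n a b -> cellp n a' b' ->
  g1 n a b = g1 n a' b' -> a = a' /\ b = b'.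
Proof. move=> hn [h1 h2 h3 h4 /orP h5] [h1' h2' h3' h4' /orP h5'].
case: h5 => /eqP h5; case: h5' => /eqP h5'; move: h5 h5'; crunch. Qed.

Lemma g2_inj n a b a' b' : 2 <= n -> cellp n a b -> cellp n a' b' ->
  g2 n a b = g2 n a' b' -> a = a' /\ b = b'.
Proof. move=> hn [h1 h2 h3 h4 /orP h5] [h1' h2' h3' h4' /orP h5'].
case: h5 => /eqP h5; case: h5' => /eqP h5'; move: h5 h5'; crunch. Qed.

Lemma g12 n a b a' b' : 2 <= n -> cellp n a b -> cellp n a' b' ->
  g1 n a b <> g2 n a' b'.
Proof. move=> hn [h1 h2 h3 h4 /orP h5] [h1' h2' h3' h4' /orP h5'].
case: h5 => /eqP h5; case: h5' => /eqP h5'; move: h5 h5'; crunch. Qed.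

Lemma g1_rng n a b : 2 <= n -> cellp n a b -> 1 <= g1 n a b <= 4 * n.
Proof. move=> hn [h1 h2 h3 h4 /orP h5]. case: h5 => /eqP h5; move: h5; crunch. Qed.

Lemma g2_rng n a b : 2 <= n -> cellp n a b -> 1 <= g2 n a b <= 4 * n.
Proof. move=> hn [h1 h2 h3 h4 /orP h5]. case: h5 => /eqP h5; move: h5; crunch. Qed.

Lemma arith_row n a a' : 2 <= n -> odd a = false -> a < 2 * n ->
  odd a' = false -> a' < 2 * n -> (a == 0) = (a' == 0) ->
  g1 n a a.+1 + g1 n a (prevo n a) + (g2 n a' a'.+1 + g2 n a' (prevo n a')) = 8 * n + 2.
Proof. move=> hn h1 h2 h3 h4 h5; case E: (a == 0) h5 => /esym h5; crunch. Qed.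

Lemma arith_col n b b' : 2 <= n -> odd b -> b < 2 * n -> odd b' -> b' < 2 * n ->
  g1 n b.-1 b + g1 n (nexte n b) b + (g2 n b'.-1 b' + g2 n (nexte n b') b') = 8 * n + 2.
Proof. move=> hn h1 h2 h3 h4; crunch. Qed.

Lemma prevoP n a : (a = 0 /\ prevo n a = (2*n).-1) \/ (a <> 0 /\ prevo n a = a.-1).
Proof. rewrite /prevo; by case: ifP => /eqP; [left|right]. Qed.
Lemma nexteP n b : (b = (2*n).-1 /\ nexte n b = 0) \/ (b <> (2*n).-1 /\ nexte n b = b.+1).
Proof. rewrite /nexte; by case: ifP => /eqP; [left|right]. Qed.

Lemma col_arith n a b : 2 <= n -> odd a = false -> a < 2 * n -> odd b -> b < 2 * n ->
  ((b == a.+1) || (b == prevo n a)) = ((a == b.-1) || (a == nexte n b)).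
Proof. move=> *; crunch. Qed.

Definition good n (S : {set 'I_n * 'I_n}) (r : 'I_n) (s : vertex n -> nat) :=
    [/\ injective s, forall v, s v < 2 * n,
        forall i, odd (s (inl i)) = false, forall j, odd (s (inr j)) &
        [/\ s (inl r) = 0,
            forall k, k < 2 * n -> exists v, s v = k &
            forall i j, ((i, j) \in S) =
               (s (inr j) == (s (inl i)).+1) || (s (inr j) == prevo n (s (inl i)))]].

Lemma row_at n (S : {set 'I_n * 'I_n}) (r : 'I_n) (s : vertex n -> nat) : good S r s -> forall k, k < 2 * n -> odd k = false ->
  exists i, s (inl i) = k.
Proof.
case=> _ _ _ hc [_ hs _] k hk ok; case: (hs k hk) => [[i|j] e]; first by exists i.
by move: (hc j); rewrite e ok.
Qed.

Lemma col_at n (S : {set 'I_n * 'I_n}) (r : 'I_n) (s : vertex n -> nat) : good S r s -> forall k, k < 2 * n -> odd k ->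
  exists j, s (inr j) = k.
Proof.
case=> _ _ hr _ [_ hs _] k hk ok; case: (hs k hk) => [[i|j] e]; last by exists j.
by move: (hr i); rewrite e ok.
Qed.

Lemma cell_good n (S : {set 'I_n * 'I_n}) (r : 'I_n) (s : vertex n -> nat) i j : good S r s -> (i, j) \in S ->
  cellp n (s (inl i)) (s (inr j)).
Proof. by case=> _ hl hr hc [_ _ hS]; rewrite hS => h; split. Qed.

Lemma sl_eq n (s : vertex n -> nat) : injective s -> forall x y, (s (inl x) == s (inl y)) = (x == y).
Proof. by move=> si x y; apply/eqP/eqP => [/si [] | ->]. Qed.
Lemma sr_eq n (s : vertex n -> nat) : injective s -> forall x y, (s (inr x) == s (inr y)) = (x == y).
Proof. by move=> si x y; apply/eqP/eqP => [/si [] | ->]. Qed.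

Lemma row_nb n (S : {set 'I_n * 'I_n}) (r : 'I_n) (s : vertex n -> nat) : 2 <= n -> good S r s -> forall i, exists j1 j2,
  [/\ j1 != j2, s (inr j1) = (s (inl i)).+1, s (inr j2) = prevo n (s (inl i)) &
      forall j, ((i, j) \in S) = (j == j1) || (j == j2)].
Proof.
move=> hn g i; have g' := g; case: g' => si hl hr hc [_ _ hS].
have ha := hl (inl i); have pa := hr i.
have [j1 e1] : exists j1, s (inr j1) = (s (inl i)).+1.
  apply: (col_at g (k := (s (inl i)).+1)); [lia | by rewrite oddS pa].
have [j2 e2] : exists j2, s (inr j2) = prevo n (s (inl i)).
  by apply: (col_at g (k := prevo n (s (inl i)))); move: ha pa; rewrite /prevo; case: ifP => ?; lia.
exists j1, j2; split => //.
- apply/negP => /eqP ej; move: e1 e2; rewrite ej => ->.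
  move: ha pa; rewrite /prevo; case: ifP => ?; lia.
- by move=> j; rewrite hS -e1 -e2 !(sr_eq si).
Qed.

Lemma col_nb n (S : {set 'I_n * 'I_n}) (r : 'I_n) (s : vertex n -> nat) : 2 <= n -> good S r s -> forall j, exists i1 i2,
  [/\ i1 != i2, s (inl i1) = (s (inr j)).-1, s (inl i2) = nexte n (s (inr j)) &
      forall i, ((i, j) \in S) = (i == i1) || (i == i2)].
Proof.
move=> hn g j; have g' := g; case: g' => si hl hr hc [_ _ hS].
have hb := hl (inr j); have pb := hc j.
have [i1 e1] : exists i1, s (inl i1) = (s (inr j)).-1.
  apply: (row_at g (k := (s (inr j)).-1)); first lia.
  lia.
have [i2 e2] : exists i2, s (inl i2) = nexte n (s (inr j)).
  apply: (row_at g (k := nexte n (s (inr j)))); move: hb pb; rewrite /nexte; case: ifP => ? //; try lia.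
exists i1, i2; split => //.
- apply/negP => /eqP ej; move: e1 e2; rewrite ej => ->.
  move: hb pb; rewrite /nexte; case: ifP => ?; lia.
- move=> i; rewrite hS col_arith //; first by rewrite -e1 -e2 !(sl_eq si).
Qed.

Lemma sum_two n (P : pred 'I_n) (F : 'I_n -> nat) j1 j2 : j1 != j2 ->
  (forall j, P j = (j == j1) || (j == j2)) -> \sum_(j | P j) F j = F j1 + F j2.
Proof.
move=> ne hP; rewrite (bigD1 j1) ?hP ?eqxx //= (bigD1 j2) ?hP ?eqxx ?orbT //=.
rewrite big1 ?addn0 // => j; rewrite hP; case/andP => /andP [].
by case/orP => /eqP -> ; rewrite eqxx.
by rewrite eq_sym.
Qed.
Lemma partA n (S : {set 'I_n * 'I_n}) (r : 'I_n) :
  hamilton_cycle S ->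
  exists s : vertex n -> nat,
    [/\ injective s, forall v, s v < 2 * n,
        forall i, odd (s (inl i)) = false, forall j, odd (s (inr j)) &
        [/\ s (inl r) = 0,
            forall k, k < 2 * n -> exists v, s v = k &
            forall i j, ((i, j) \in S) =
               (s (inr j) == (s (inl i)).+1) || (s (inr j) == prevo n (s (inl i)))]].
Proof.
case=> c [Hu Hsz Hcyc HS].
set N := 2 * n.
have Nev : odd N = false by rewrite /N oddM.
have Hall : forall v, v \in c.
  move=> v; apply/negPn/negP => Hv.
  have Hu' : uniq (v :: c) by rewrite /= Hv Hu.
  have := @max_card (vertex n) (mem (v :: c)).
  move/card_uniqP: Hu' => ->; rewrite /= Hsz card_sum !card_ord; lia.
pose x0 : vertex n := inl r.
pose idx v := index v c.
have idxlt : forall v, idx v < N by move=> v; rewrite /N -Hsz index_mem.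
have idxK : forall v, nth x0 c (idx v) = v by move=> v; rewrite nth_index.
have nthK : forall k, k < N -> idx (nth x0 c k) = k.
  by move=> k hk; rewrite /idx index_uniq // Hsz.
have idxinj : injective idx.
  by move=> u v e; rewrite -(idxK u) -(idxK v) e.
have Npos : 0 < N by have := idxlt x0; lia.
have idxnext : forall v, idx (next c v) = (idx v).+1 %% N.
  move=> v; rewrite next_nth Hall.
  case Ec: c Hsz Hu (idxlt v) => [|y p] Hsz' Hu' Hlt; first by move: Npos; rewrite /N -Hsz'.
  have -> : index v (y :: p) = idx v by rewrite /idx Ec.
  case: (ltngtP (idx v).+1 N) => Hk.
  - rewrite modn_small //.
    have -> : nth y p (idx v) = nth x0 c (idx v).+1.
      by rewrite Ec /= (set_nth_default x0) //; move: Hsz' Hk; rewrite /N /=; lia.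
    by rewrite nthK.
  - lia.
  - rewrite Hk modnn nth_default; last by move: Hsz' Hk; rewrite /N /=; lia.
    have -> : y = nth x0 c 0 by rewrite Ec.
    by rewrite nthK.
pose r0 := is_row_vertex (nth x0 c 0).
have alt : forall k, k < N -> is_row_vertex (nth x0 c k) = r0 (+) odd k.
  elim=> [|k IH] hk; first by rewrite addbF.
  have Hn := next_cycle Hcyc (Hall (nth x0 c k)).
  have -> : nth x0 c k.+1 = next c (nth x0 c k).
    apply: idxinj; rewrite idxnext nthK ?nthK ?modn_small //; lia.
  rewrite oddS addbN; move: Hn => /=; rewrite IH; last by lia.
  by case: (is_row_vertex _); case: (r0 (+) odd k).
have [r1 altv] : exists r1, forall v, is_row_vertex v = r1 (+) odd (idx v).
  by exists r0 => v; rewrite -alt // idxK.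
clear alt.
pose p0 := idx (inl r).
have p0lt : p0 < N by apply: idxlt.
pose s v := (idx v + (N - p0)) %% N.
have snext : forall v, s (next c v) = (s v).+1 %% N.
  move=> v; rewrite /s idxnext modnDml -(addn1 ((idx v + (N - p0)) %% N)) modnDml; congr (_ %% _); lia.
have sodd : forall v, odd (s v) = odd (idx v) (+) odd p0.
  by move=> v; rewrite /s odd_mod // oddD oddB ?Nev //; apply: ltnW.
have sinj : injective s.
  move=> u v /eqP; rewrite /s eqn_modDr !modn_small ?idxlt // => /eqP.
  exact: idxinj.
have slt : forall v, s v < N by move=> v; rewrite /s ltn_pmod.
have srow : forall i, odd (s (inl i)) = false.
  move=> i; rewrite sodd; have := altv (inl i); have := altv (inl r); clear altv.
  rewrite /p0 /=; case: r1; case: (odd (idx (inl i))); case: (odd (idx (inl r))) => //.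
have scol : forall j, odd (s (inr j)).
  move=> j; rewrite sodd; have := altv (inr j); have := altv (inl r); clear altv.
  rewrite /p0 /=; case: r1; case: (odd (idx (inr j))); case: (odd (idx (inl r))) => //.
exists s; split => //; split.
- by rewrite /s subnKC ?modnn // ltnW.
- move=> k hk; exists (nth x0 c ((k + p0) %% N)).
  rewrite /s nthK ?ltn_pmod // modnDml -addnA subnKC ?(ltnW p0lt) // modnDr modn_small //.
- move=> i j; rewrite HS.
  have E : forall u v, (next c u == v) = ((s u).+1 %% N == s v).
    by move=> u v; rewrite -snext (inj_eq sinj).
  rewrite !E.
  have ha := slt (inl i); have hb := slt (inr j).
  have pa := srow i; have pb := scol j.
  rewrite (modn_small (m := (s (inl i)).+1)); last by lia.
  move: ha hb pa pb; set a := s (inl i); set b := s (inr j); clearbody a b => ha hb pa pb.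
  rewrite /prevo.
  case: (ltngtP b.+1 N) => Hk.
  + rewrite (modn_small (m := b.+1)) //; have eN : N = 2 * n by []; case: ifP => ?; lia.
  + lia.
  + rewrite Hk modnn; have eN : N = 2 * n by []; case: ifP => ?; lia.
Qed.

Unset Implicit Arguments.

Theorem lemma2p1 (n : nat) (S1 S2 : {set 'I_n * 'I_n}) :
  2 <= n ->
  [disjoint S1 & S2] ->
  hamilton_cycle S1 ->
  hamilton_cycle S2 ->
  exists f : 'I_n * 'I_n -> nat,
    [/\ perm_eq [seq f x | x <- enum (S1 :|: S2)] (iota 1 (4 * n)),
        forall i : 'I_n, \sum_(j : 'I_n | (i, j) \in S1 :|: S2) f (i, j) = 8 * n + 2 &
        forall j : 'I_n, \sum_(i : 'I_n | (i, j) \in S1 :|: S2) f (i, j) = 8 * n + 2].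
Proof.
move=> hn hdis h1 h2.
pose r : 'I_n := @Ordinal n 0 (leq_trans (isT : 0 < 2) hn).
have [s1 G1] : exists s, good S1 r s := partA r h1.
have [s2 G2] : exists s, good S2 r s := partA r h2.
have G1' := G1; have G2' := G2.
case: G1' => si1 hl1 hr1 hc1 [z1 _ HS1].
case: G2' => si2 hl2 hr2 hc2 [z2 _ HS2].
pose f := fun x : 'I_n * 'I_n => if x \in S1 then g1 n (s1 (inl x.1)) (s1 (inr x.2))
                                 else g2 n (s2 (inl x.1)) (s2 (inr x.2)).
have notS1 : forall x, x \in S2 -> (x \in S1) = false by move=> x; apply: disjointFl.
have finj : {in S1 :|: S2 &, injective f}.
  move=> [i j] [i' j']; rewrite !inE /f /= => hx hy.
  case: ifP => x1; case: ifP => y1.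
  - move=> e; have [ea eb] := g1_inj hn (cell_good G1 x1) (cell_good G1 y1) e.
    move/eqP: ea; rewrite (sl_eq si1) => /eqP ->.
    by move/eqP: eb; rewrite (sr_eq si1) => /eqP ->.
  - have y2 : (i', j') \in S2 by move: hy; rewrite y1.
    by move/(g12 hn (cell_good G1 x1) (cell_good G2 y2)).
  - have x2 : (i, j) \in S2 by move: hx; rewrite x1.
    by move/esym/(g12 hn (cell_good G1 y1) (cell_good G2 x2)).
  - have y2 : (i', j') \in S2 by move: hy; rewrite y1.
    have x2 : (i, j) \in S2 by move: hx; rewrite x1.
    move=> e; have [ea eb] := g2_inj hn (cell_good G2 x2) (cell_good G2 y2) e.
    move/eqP: ea; rewrite (sl_eq si2) => /eqP ->.
    by move/eqP: eb; rewrite (sr_eq si2) => /eqP ->.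
exists f; split.
- apply: uniq_perm; first by rewrite map_inj_in_uniq ?enum_uniq // => x y; rewrite !mem_enum; exact: finj.
    exact: iota_uniq.
  move=> v; rewrite mem_iota; apply/mapP/idP.
  + case=> [[i j]]; rewrite mem_enum inE /f /= => hx ->.
    case: ifP => x1.
    * by rewrite add1n ltnS; exact: g1_rng hn (cell_good G1 x1).
    * have x2 : (i, j) \in S2 by move: hx; rewrite x1.
      by rewrite add1n ltnS; exact: g2_rng hn (cell_good G2 x2).
  + move=> hv.
    have [hA|hA] := leqP v n.
      have [i ei] := row_at G1 (k := 2 * (v - 1)) ltac:(lia) ltac:(lia).
      have [j ej] := col_at G1 (k := (2 * (v - 1)).+1) ltac:(lia) ltac:(lia).
      have hx : (i, j) \in S1 by rewrite HS1 ei ej eqxx.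
      exists (i, j); first by rewrite mem_enum inE hx.
      by rewrite /f /= hx ei ej /g1 eqxx; lia.
    have [hB|hB] := leqP v (2 * n).
      have [i ei] := row_at G2 (k := 2 * (2 * n - v)) ltac:(lia) ltac:(lia).
      have [j ej] := col_at G2 (k := (2 * (2 * n - v)).+1) ltac:(lia) ltac:(lia).
      have hx : (i, j) \in S2 by rewrite HS2 ei ej eqxx.
      exists (i, j); first by rewrite mem_enum inE hx orbT.
      by rewrite /f /= notS1 // ei ej /g2 eqxx; lia.
    have [hC|hC] := leqP v (3 * n).
      have [b eb] : {b | b = (2 * (v - 2 * n - 1)).+1} by eexists.
      have [j ej] := col_at G2 (k := b) ltac:(lia) ltac:(lia).
      have [i ei] := row_at G2 (k := nexte n b) ltac:(rewrite /nexte; case: ifP; lia)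
                                                 ltac:(rewrite /nexte; case: ifP; lia).
      have hx : (i, j) \in S2 by rewrite HS2 ei ej; have := prevoP n (nexte n b); have := nexteP n b; lia.
      exists (i, j); first by rewrite mem_enum inE hx orbT.
      by rewrite /f /= notS1 // ei ej /g2; case: ifP => ?; have := nexteP n b; lia.
    have [b eb] : {b | b = (2 * (4 * n - v)).+1} by eexists.
    have [j ej] := col_at G1 (k := b) ltac:(lia) ltac:(lia).
    have [i ei] := row_at G1 (k := nexte n b) ltac:(rewrite /nexte; case: ifP; lia)
                                               ltac:(rewrite /nexte; case: ifP; lia).
    have hx : (i, j) \in S1 by rewrite HS1 ei ej; have := prevoP n (nexte n b); have := nexteP n b; lia.
    exists (i, j); first by rewrite mem_enum inE hx.
    by rewrite /f /= hx ei ej /g1; case: ifP => ?; have := nexteP n b; lia.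
- move=> i; rewrite (bigID (fun j => (i, j) \in S1)) /=.
  have e1 : \sum_(j | ((i, j) \in S1 :|: S2) && ((i, j) \in S1)) f (i, j) =
            \sum_(j | (i, j) \in S1) g1 n (s1 (inl i)) (s1 (inr j)).
    apply: eq_big => j; first by rewrite inE; case: ((i, j) \in S1); rewrite ?andbT ?andbF.
    by case/andP => _ hj; rewrite /f /= hj.
  have e2 : \sum_(j | ((i, j) \in S1 :|: S2) && ~~ ((i, j) \in S1)) f (i, j) =
            \sum_(j | (i, j) \in S2) g2 n (s2 (inl i)) (s2 (inr j)).
    apply: eq_big => j.
      rewrite inE; case hj: ((i, j) \in S2); last by rewrite orbF andbN.
      by rewrite notS1.
    by case/andP => _ hj; rewrite /f /= (negbTE hj).
  rewrite e1 e2.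
  have [j1 [j2 [ne E1 E2 hP]]] := row_nb hn G1 i.
  have [j3 [j4 [ne' E3 E4 hP']]] := row_nb hn G2 i.
  rewrite (sum_two (P := fun j => (i, j) \in S1) _ ne hP).
  rewrite (sum_two (P := fun j => (i, j) \in S2) _ ne' hP') E1 E2 E3 E4.
  apply: arith_row => //.
  have -> : (s1 (inl i) == 0) = (i == r) by rewrite -z1 (sl_eq si1).
  by rewrite -z2 (sl_eq si2).
- move=> j; rewrite (bigID (fun i => (i, j) \in S1)) /=.
  have e1 : \sum_(i | ((i, j) \in S1 :|: S2) && ((i, j) \in S1)) f (i, j) =
            \sum_(i | (i, j) \in S1) g1 n (s1 (inl i)) (s1 (inr j)).
    apply: eq_big => i; first by rewrite inE; case: ((i, j) \in S1); rewrite ?andbT ?andbF.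
    by case/andP => _ hj; rewrite /f /= hj.
  have e2 : \sum_(i | ((i, j) \in S1 :|: S2) && ~~ ((i, j) \in S1)) f (i, j) =
            \sum_(i | (i, j) \in S2) g2 n (s2 (inl i)) (s2 (inr j)).
    apply: eq_big => i.
      rewrite inE; case hj: ((i, j) \in S2); last by rewrite orbF andbN.
      by rewrite notS1.
    by case/andP => _ hj; rewrite /f /= (negbTE hj).
  rewrite e1 e2.
  have [i1 [i2 [ne E1 E2 hP]]] := col_nb hn G1 j.
  have [i3 [i4 [ne' E3 E4 hP']]] := col_nb hn G2 j.
  rewrite (sum_two (P := fun i => (i, j) \in S1) _ ne hP).
  rewrite (sum_two (P := fun i => (i, j) \in S2) _ ne' hP') E1 E2 E3 E4.
  exact: arith_col.
Qed.
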